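(* Let $p_{Y|X}p_X$ define a finite IB problem. The IB curve has a linear segment at $\beta=1$, i.e., there is a nondegenerate interval of $I_X$-values on which the IB curve $I_Y(I_X)$ is affine with slope $1/\beta=1$, if and only if the joint distribution $p_{Y|X}p_X$ decomposes.
   Context: $\mathcal{X},\mathcal{Y}$ are finite sets and $p(x,y)=p(y|x)p(x)$ is a joint distribution with $p(x)>0$. The IB curve is $I_Y(I_X):=\max\{I(Y;\hat X): I(X;\hat X)\le I_X\}$, the maximum taken over all random variables $\hat X$ on finite alphabets forming a Markov chain $Y\leftrightarrow X\leftrightarrow\hat X$ (i.e., over encoders $p(\hat x|x)$). A matrix decomposes if, after permuting its rows and columns, it can be written non-trivially as a block (diagonal) matrix with at least two blocks; here the matrix is the $|\mathcal{X}|\times|\mathcal{Y}|$ matrix $(p(y|x)p(x))_{x,y}$. *)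

(* Defs.v *)
From HB Require Import structures.
From mathcomp Require Import all_boot all_order all_algebra.
From mathcomp Require Import all_classical all_reals all_analysis.
Set Implicit Arguments. Unset Strict Implicit. Unset Printing Implicit Defensive.
Import Order.TTheory GRing.Theory Num.Theory.
Local Open Scope ring_scope.
Local Open Scope classical_set_scope.

Definition mutinf (R : realType) (A B : finType) (r : A -> B -> R) : R :=
  let rA a := \sum_(b : B) r a b in
  let rB b := \sum_(a : A) r a b in
  \sum_(a : A) \sum_(b : B)
     (if r a b == 0 then 0 else r a b * ln (r a b / (rA a * rB b))).

(* p x y = p(y|x) p(x): the joint distribution of (X,Y). *)
Definition pX (R : realType) (X Y : finType) (p : X -> Y -> R) (x : X) : R :=
  \sum_(y : Y) p x y.

Definition encoder (R : realType) (X T : finType) (q : X -> T -> R) : Prop :=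
  (forall x t, 0 <= q x t) /\ (forall x, \sum_(t : T) q x t = 1).

Definition IXT (R : realType) (X Y T : finType) (p : X -> Y -> R)
  (q : X -> T -> R) : R := mutinf (fun x t => pX p x * q x t).

(* I(Y;Xhat) under the Markov chain Y <-> X <-> Xhat:
   joint p(y,xhat) = sum_x p(x,y) q(xhat|x). *)
Definition IYT (R : realType) (X Y T : finType) (p : X -> Y -> R)
  (q : X -> T -> R) : R := mutinf (fun y t => \sum_(x : X) p x y * q x t).

Definition IB_values (R : realType) (X Y : finType) (p : X -> Y -> R) (IX : R)
  : set R :=
  [set iy | exists (T : finType) (q : X -> T -> R),
      encoder q /\ IXT p q <= IX /\ iy = IYT p q].

(* The IB curve I_Y(I_X) (the max is attained; we write it as the sup). *)
Definition IB_curve (R : realType) (X Y : finType) (p : X -> Y -> R) (IX : R)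
  : R := sup (IB_values p IX).

Definition linear_segment_beta1 (R : realType) (X Y : finType)
  (p : X -> Y -> R) : Prop :=
  exists a b : R, 0 <= a /\ a < b /\
    forall ix, a <= ix <= b -> IB_curve p ix = IB_curve p a + (ix - a).

(* The |X| x |Y| matrix (p x y) decomposes: after permuting rows and columns
   it is block diagonal with k >= 2 (nonempty) blocks; row x goes to block f x,
   column y to block g y, and entries outside the diagonal blocks vanish. *)
Definition decomposes (R : realType) (X Y : finType) (p : X -> Y -> R) : Prop :=
  exists (k : nat) (f : X -> 'I_k) (g : Y -> 'I_k),
    (2 <= k)%N /\
    (forall i : 'I_k, exists x, f x = i) /\
    (forall i : 'I_k, exists y, g y = i) /\
    (forall x y, p x y != 0 -> f x = g y).

(* Main.v *)
Require Import Defs.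
From HB Require Import structures.
From mathcomp Require Import all_boot all_order all_algebra.
From mathcomp Require Import all_classical all_reals all_analysis.
From mathcomp Require Import ring lra.
Import Order.TTheory GRing.Theory Num.Theory.
Local Open Scope ring_scope.
Set Implicit Arguments. Unset Strict Implicit. Unset Printing Implicit Defensive.

Section S.
Variable R : realType.

Lemma sum_option (T : finType) (F : option T -> R) :
  \sum_(o : option T) F o = F None + \sum_(t : T) F (Some t).
Proof. rewrite (bigD1 None) //=; congr (_ + _).
rewrite (reindex_omap Some id) //=; last by case.
by apply: eq_bigl => t; rewrite eqxx.
Qed.

Lemma ln_le_sub1 (x : R) : 0 < x -> ln x <= x - 1.
Proof. move=> x0; have := expR_ge1Dx (ln x); rewrite lnK ?posrE //; lra. Qed.

Lemma le_sum1 (I : finType) (F : I -> R) i : (forall j, 0 <= F j) -> F i <= \sum_j F j.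
Proof. move=> h; rewrite (bigD1 i) //= lerDl sumr_ge0 //. Qed.

Definition erase (A B : finType) (l : R) (r : A -> B -> R) (a : A) (o : option B) : R :=
  match o with Some b => l * r a b | None => (1 - l) * \sum_b r a b end.

Lemma mutinf_erase (A B : finType) (r : A -> B -> R) (l : R) :
 (forall a b, 0 <= r a b) -> \sum_a \sum_b r a b = 1 -> 0 <= l <= 1 ->
 mutinf (erase l r) = l * mutinf r.
Proof.
move=> r0 r1 /andP[l0 l1].
rewrite /mutinf /=.
have hA : forall a, \sum_(o : option B) erase l r a o = \sum_b r a b.
  move=> a; rewrite sum_option /= -mulr_sumr; ring.
have hN : \sum_a erase l r a None = 1 - l by rewrite /= -mulr_sumr r1 mulr1.
have hS : forall b, \sum_a erase l r a (Some b) = l * \sum_a r a b.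
  by move=> b; rewrite /= mulr_sumr.
rewrite mulr_sumr; apply: eq_bigr => a _.
rewrite sum_option hA hN; set rA := \sum_b r a b.
have -> : (if erase l r a None == 0 then 0 else erase l r a None * ln (erase l r a None / (rA * (1 - l)))) = 0.
  rewrite /=; case: eqP => // /eqP; rewrite mulf_eq0 negb_or => /andP[h1 h2].
  by rewrite [rA * _]mulrC divff ?mulf_neq0 // ln1 mulr0.
rewrite add0r mulr_sumr; apply: eq_bigr => b _.
rewrite hS /=.
have [->|lne0] := eqVneq l 0; first by rewrite !mul0r eqxx.
rewrite mulf_eq0 (negbTE lne0) /=; case: eqP => _; first by rewrite mulr0.
rewrite -mulrA; congr (_ * (_ * ln _)).
by rewrite mulrCA invfM mulrACA mulfV // mul1r.
Qed.

Lemma key_term (p q r s pY : R): 0 < p -> 0 < q -> 0 < r -> 0 < s -> 0 < pY ->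
 2 * p * q - 2 * p * Num.sqrt q * Num.sqrt (s/pY) <= p * q * (ln (q/r) - ln (s/(pY*r))).
Proof.
move=> p0 q0 r0 s0 y0.
set u := Num.sqrt q; set w := Num.sqrt (s/pY).
have u0 : 0 < u by rewrite sqrtr_gt0.
have spY : 0 < s / pY by rewrite divr_gt0.
have w0 : 0 < w by rewrite sqrtr_gt0.
have uq : u ^+ 2 = q by rewrite sqr_sqrtr // ltW.
have ws : w ^+ 2 = s / pY by rewrite sqr_sqrtr // ltW.
set z := w / u.
have z0 : 0 < z by rewrite divr_gt0.
have E : s / (pY * r) = (q / r) * z ^+ 2.
  rewrite /z expr_div_n uq ws; field.
  by rewrite !gt_eqF.
rewrite E.
have -> : ln (q / r * z ^+ 2) = ln (q/r) + ln (z^+2).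
  by rewrite lnM // posrE ?divr_gt0 ?exprn_gt0.
rewrite lnXn //.
have hz := ln_le_sub1 z0.
have hpq : p * q * z = p * u * w.
  rewrite /z -uq; field; by rewrite gt_eqF.
have h1 : 0 <= z - 1 - ln z by lra.
have := mulr_ge0 (ltW (mulr_gt0 p0 q0)) h1.
rewrite -mulr_natr. nra.
Qed.

Variables (X Y : finType) (p : X -> Y -> R).
Hypothesis p0 : forall x y, 0 <= p x y.
Hypothesis pXpos : forall x, 0 < pX p x.
Hypothesis pX1 : \sum_x pX p x = 1.

Definition pY (y : Y) := \sum_x p x y.
Definition rq (q : X -> R) := \sum_x pX p x * q x.
Definition sq (q : X -> R) (y : Y) := \sum_x p x y * q x.
Definition gX (q : X -> R) := \sum_x (if q x == 0 then 0 else pX p x * q x * ln (q x / rq q)).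
Definition gY (q : X -> R) := \sum_y (if sq q y == 0 then 0 else sq q y * ln (sq q y / (pY y * rq q))).
Definition Hs (q : X -> R) := \sum_x \sum_y p x y * (Num.sqrt (q x) - Num.sqrt (sq q y / pY y)) ^+ 2.

Lemma Hs_ge0 q : 0 <= Hs q.
Proof. apply: sumr_ge0 => x _; apply: sumr_ge0 => y _; by rewrite mulr_ge0 ?p0 ?sqr_ge0. Qed.

Lemma gap_ge q : (forall x, 0 <= q x) -> Hs q <= gX q - gY q.
Proof.
move=> q0.
set r := rq q.
have eX : gX q = \sum_x \sum_y (if q x == 0 then 0 else p x y * q x * ln (q x / r)).
  apply: eq_bigr => x _; case: eqP => _; first by rewrite big1.
  by rewrite /pX !mulr_suml.
have eY : gY q = \sum_x \sum_y (if p x y * q x == 0 then 0 else p x y * q x * ln (sq q y / (pY y * r))).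
  rewrite exchange_big; apply: eq_bigr => y _.
  case: eqP => [s0|_].
    rewrite big1 // => x _.
    have -> : p x y * q x = 0.
      by apply: (psumr_eq0P (P := predT) (F := fun x => p x y * q x)) => // i _; rewrite mulr_ge0 ?p0.
    by rewrite eqxx.
  rewrite /sq mulr_suml; apply: eq_bigr => x _.
  by case: eqP => // ->; rewrite mul0r.
rewrite eX eY -sumrB.
have eH : Hs q = \sum_x \sum_y (2 * p x y * q x - 2 * p x y * Num.sqrt (q x) * Num.sqrt (sq q y / pY y)).
  have t1 : forall x y, p x y * (Num.sqrt (q x) - Num.sqrt (sq q y / pY y)) ^+ 2 =
     (2 * p x y * q x - 2 * p x y * Num.sqrt (q x) * Num.sqrt (sq q y / pY y)) +
     (p x y * Num.sqrt (sq q y / pY y) ^+ 2 - p x y * q x).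
    move=> x y; rewrite sqrrB (sqr_sqrtr (q0 x)); ring.
  rewrite /Hs; under eq_bigr do under eq_bigr do rewrite t1.
  under eq_bigr do rewrite big_split /=.
  rewrite big_split /= -[RHS]addr0; congr (_ + _).
  rewrite exchange_big big1 // => y _.
  rewrite sumrB -mulr_suml -/(pY y) -/(sq q y).
  have s0 : 0 <= sq q y by apply: sumr_ge0 => x _; rewrite mulr_ge0 ?p0.
  have [y0|yn0] := eqVneq (pY y) 0.
    have pz : forall x, p x y = 0.
      by move=> x; apply: (psumr_eq0P (P := predT) (F := fun x => p x y)) => // i _; rewrite p0.
    by rewrite y0 mul0r /sq big1 ?subrr // => x _; rewrite pz mul0r.
  have yp : 0 < pY y by rewrite lt_def yn0 sumr_ge0 // => x _; rewrite p0.
  rewrite sqr_sqrtr; last by rewrite divr_ge0 // ltW.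
  by rewrite mulrC divfK // subrr.
rewrite eH; apply: ler_sum => x _; rewrite -sumrB; apply: ler_sum => y _.
have [pz|pnz] := eqVneq (p x y) 0.
  by rewrite pz !(mulr0, mul0r) eqxx; case: ifP => _; rewrite subrr.
have [qz|qnz] := eqVneq (q x) 0.
  by rewrite qz sqrtr0 !mulr0 mul0r subrr eqxx subrr.
have pp : 0 < p x y by rewrite lt_def pnz p0.
have qp : 0 < q x by rewrite lt_def qnz q0.
rewrite mulf_eq0 (negbTE pnz) (negbTE qnz) /= -mulrBr.
have rp : 0 < r.
  apply: (lt_le_trans _ (le_sum1 (F := fun x => pX p x * q x) x _)).
    by rewrite mulr_gt0.
  by move=> j; rewrite mulr_ge0 // ltW.
have sp : 0 < sq q y.
  apply: (lt_le_trans _ (le_sum1 (F := fun x => p x y * q x) x _)).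
    by rewrite mulr_gt0.
  by move=> j; rewrite mulr_ge0 ?p0.
have yp : 0 < pY y by apply: (lt_le_trans pp); exact: le_sum1.
exact: key_term.
Qed.

Lemma pX_neq0 x : pX p x != 0.
Proof. by rewrite gt_eqF. Qed.

Lemma IXT_sum (T : finType) (q : X -> T -> R) : encoder q ->
  IXT p q = \sum_t gX (fun x => q x t).
Proof.
move=> [q0 q1]; rewrite /IXT /mutinf /= exchange_big; apply: eq_bigr => t _.
apply: eq_bigr => x _.
rewrite -mulr_sumr q1 mulr1 mulf_eq0 (negbTE (pX_neq0 x)) /=.
case: eqP => // _; congr (_ * ln _).
by rewrite invfM mulrACA mulfV ?pX_neq0 // mul1r.
Qed.

Lemma IYT_sum (T : finType) (q : X -> T -> R) : encoder q ->
  IYT p q = \sum_t gY (fun x => q x t).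
Proof.
move=> [q0 q1]; rewrite /IYT /mutinf /= exchange_big; apply: eq_bigr => t _.
apply: eq_bigr => y _.
have -> : \sum_b \sum_x p x y * q x b = pY y.
  by rewrite exchange_big; apply: eq_bigr => x _; rewrite -mulr_sumr q1 mulr1.
have -> : \sum_a \sum_x p x a * q x t = rq (fun x => q x t).
  by rewrite exchange_big; apply: eq_bigr => x _; rewrite -mulr_suml.
by [].
Qed.

Lemma dpi (T : finType) (q : X -> T -> R) : encoder q -> IYT p q <= IXT p q.
Proof.
move=> e; rewrite IXT_sum // IYT_sum //; apply: ler_sum => t _.
have := gap_ge (q := fun x => q x t) (fun x => e.1 x t).
have := Hs_ge0 (fun x => q x t); lra.
Qed.

Definition En (u : X -> R) (v : Y -> R) := \sum_x \sum_y p x y * (u x - v y) ^+ 2.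

Lemma En_term u v a b : p a b != 0 -> (u a - v b) ^+ 2 <= (p a b)^-1 * En u v.
Proof.
move=> h; have pp : 0 < p a b by rewrite lt_def h p0.
rewrite -(ler_pM2l pp) mulVKf //.
apply: le_trans (le_sum1 (F := fun y => p a y * (u a - v y) ^+ 2) b _) _.
  by move=> j; rewrite mulr_ge0 ?p0 ?sqr_ge0.
apply: (le_sum1 (F := fun x => \sum_y p x y * (u x - v y) ^+ 2)).
by move=> j; apply: sumr_ge0 => y _; rewrite mulr_ge0 ?p0 ?sqr_ge0.
Qed.

Lemma En_ge0 u v : 0 <= En u v.
Proof. apply: sumr_ge0 => x _; apply: sumr_ge0 => y _; rewrite mulr_ge0 ?p0 ?sqr_ge0 //. Qed.

Lemma poincare_pair : ~ decomposes p -> forall x x', exists c : R, 0 <= c /\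
  forall (u : X -> R) (v : Y -> R), (u x - u x') ^+ 2 <= c * En u v.
Proof.
move=> nd x.
pose S z := exists c : R, 0 <= c /\ forall (u : X -> R) (v : Y -> R), (u x - u z) ^+ 2 <= c * En u v.
have step : forall a b y, S a -> p a y != 0 -> p b y != 0 -> S b.
  move=> a b y [c [c0 hc]] ha hb.
  exists (3 * c + 3 * (p a y)^-1 + 3 * (p b y)^-1); split.
    have := p0 a y; have := p0 b y.
    by rewrite !addr_ge0 ?mulr_ge0 ?invr_ge0 ?p0.
  move=> u v.
  have h1 := hc u v; have h2 := En_term u v ha; have h3 := En_term u v hb.
  have : (u x - u b) ^+ 2 <= 3 * ((u x - u a) ^+ 2 + (u a - v y) ^+ 2 + (u b - v y) ^+ 2).
    set al := u x - u a; set be := u a - v y; set ga := u b - v y.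
    have -> : u x - u b = al + be - ga by rewrite /al /be /ga; ring.
    have := sqr_ge0 (al - be); have := sqr_ge0 (al + ga); have := sqr_ge0 (be + ga).
    nra.
  move=> h; apply: (le_trans h).
  rewrite !mulrDl -!mulrA; lra.
move=> x'; apply: contrapT => nS'.
apply: nd.
pose i0 : 'I_2 := ord0.
pose i1 : 'I_2 := @Ordinal 2 1 isT.
have I2 : forall i : 'I_2, i = i0 \/ i = i1.
  case=> [[|[|n]] Hi]; [left|right|by []]; exact: val_inj.
have Sx : S x by exists 0; split => // u v; rewrite subrr expr0n /= mul0r.
have ex_y : forall z, exists y, p z y != 0.
  move=> z; apply: contrapT => hn.
  have : pX p z = 0 by apply: big1 => y _; apply: contrapT => hy; apply: hn; exists y; apply/eqP.
  by move/eqP; rewrite (negbTE (pX_neq0 z)).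
exists 2%N, (fun z => if pselect (S z) then i1 else i0),
  (fun y => if pselect (exists z, S z /\ p z y != 0) then i1 else i0).
split => //; split.
  move=> i; case: (I2 i) => ->.
    by exists x'; case: pselect.
  by exists x; case: pselect.
split.
  move=> i; case: (I2 i) => ->.
    have [y hy] := ex_y x'; exists y; case: pselect => // -[z [hz hzy]].
    by case: nS'; apply: step hz hzy hy.
  have [y hy] := ex_y x; exists y; case: pselect => // -[]; by exists x.
move=> z y hzy; case: pselect => hz; case: pselect => // hy.
  by case: hy; exists z.
by case: hy => z' [hz' hz'y]; case: hz; apply: step hz' hz'y hzy.
Qed.

Definition K0 := \sum_x (2 + 2 * pX p x) / pX p x.
Definition K1 (C : X -> X -> R) := \sum_x \sum_x' pX p x * pX p x' * C x x'.

Lemma K0_ge0 : 0 <= K0.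
Proof. apply: sumr_ge0 => x _; have := pXpos x => h; rewrite divr_ge0 ?ltW //; lra. Qed.

Lemma K1_ge0 C : (forall x x', 0 <= C x x') -> 0 <= K1 C.
Proof. move=> hC; apply: sumr_ge0 => x _; apply: sumr_ge0 => y _; rewrite !mulr_ge0 // ?hC // ltW //. Qed.

Lemma gX_le (C : X -> X -> R) : (forall x x', 0 <= C x x') ->
  (forall x x' u v, (u x - u x') ^+ 2 <= C x x' * En u v) ->
  forall q, (forall x, 0 <= q x) -> gX q <= (K0 * K1 C) * Hs q.
Proof.
move=> C0 hC q q0.
have pX0 : forall x, 0 <= pX p x by move=> x; exact: ltW.
set r := rq q.
have r0 : 0 <= r by apply: sumr_ge0 => x _; rewrite mulr_ge0.
have Kge0 : 0 <= K0 * K1 C by rewrite mulr_ge0 ?K0_ge0 ?K1_ge0.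
have [rz|rnz] := eqVneq r 0.
  have qz : forall x, q x = 0.
    move=> x; have : pX p x * q x = 0.
      by apply: (psumr_eq0P (P := predT) (F := fun x => pX p x * q x)) => // i _; rewrite mulr_ge0.
    by move/eqP; rewrite mulf_eq0 (negbTE (pX_neq0 x)) => /eqP.
  rewrite /gX big1; first by rewrite mulr_ge0 ?Hs_ge0.
  by move=> x _; rewrite qz eqxx.
have rp : 0 < r by rewrite lt_def rnz r0.
have qler : forall x, pX p x * q x <= r.
  by move=> x; apply: (le_sum1 (F := fun x => pX p x * q x)) => j; rewrite mulr_ge0.
have st1 : gX q <= \sum_x pX p x * (q x - r) ^+ 2 / r.
  apply: (@le_trans _ _ (\sum_x pX p x * q x * (q x / r - 1))).
    apply: ler_sum => x _; case: eqP => [->|qn]; first by rewrite mulr0 mul0r.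
    apply: ler_wpM2l; first by rewrite mulr_ge0.
    apply: ln_le_sub1; rewrite divr_gt0 // lt_def q0 andbT; exact/eqP.
  rewrite le_eqVlt; apply/orP; left; apply/eqP.
  apply/eqP; rewrite -subr_eq0 -sumrB.
  rewrite (eq_bigr (fun x => pX p x * q x - pX p x * r)); last first.
    by move=> x _; field.
  by rewrite sumrB -mulr_suml pX1 mul1r subrr.
set a := fun x => Num.sqrt (q x).
set b := Num.sqrt r.
have bp : 0 < b by rewrite sqrtr_gt0.
have aq : forall x, a x ^+ 2 = q x by move=> x; rewrite sqr_sqrtr.
have br : b ^+ 2 = r by rewrite sqr_sqrtr.
have a0 : forall x, 0 <= a x by move=> x; exact: sqrtr_ge0.
have st2 : \sum_x pX p x * (q x - r) ^+ 2 / r <= K0 * \sum_x pX p x * (a x - b) ^+ 2.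
  rewrite mulr_sumr; apply: ler_sum => x _.
  have cK : (2 + 2 * pX p x) / pX p x <= K0.
    apply: (le_sum1 (F := fun x => (2 + 2 * pX p x) / pX p x)) => j.
    by have := pX0 j => h; rewrite divr_ge0 //; lra.
  have h1 : pX p x * (a x + b) ^+ 2 <= (2 + 2 * pX p x) * b ^+ 2.
    have := qler x; rewrite -aq -br => h.
    have := pX0 x => h0; have := sqr_ge0 (a x - b) => h2.
    nra.
  have h2 : pX p x * (q x - r) ^+ 2 / r <= (2 + 2 * pX p x) * (a x - b) ^+ 2.
    rewrite -aq -br.
    have -> : pX p x * (a x ^+ 2 - b ^+ 2) ^+ 2 / b ^+ 2 =
              (a x - b) ^+ 2 * (pX p x * (a x + b) ^+ 2 / b ^+ 2).
      by field; rewrite gt_eqF.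
    rewrite mulrC; apply: ler_wpM2r; first exact: sqr_ge0.
    by rewrite ler_pdivrMr ?exprn_gt0.
  apply: (le_trans h2).
  have -> : (2 + 2 * pX p x) * (a x - b) ^+ 2 = ((2 + 2 * pX p x) / pX p x) * (pX p x * (a x - b) ^+ 2).
    by field; rewrite pX_neq0.
  apply: ler_wpM2r => //; by rewrite mulr_ge0 ?sqr_ge0.
have er : \sum_x pX p x * q x = r by [].
set m := \sum_x pX p x * a x.
have eL : \sum_x pX p x * (a x - b) ^+ 2 = 2 * b ^+ 2 - 2 * b * m.
  rewrite (eq_bigr (fun x => pX p x * q x - 2 * b * (pX p x * a x) + r * pX p x)); last first.
    by move=> x _; rewrite -aq -br; ring.
  rewrite big_split /= sumrB -!mulr_sumr pX1 er -/m br; ring.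
have eD : \sum_x \sum_x' pX p x * pX p x' * (a x - a x') ^+ 2 = 2 * b ^+ 2 - 2 * m ^+ 2.
  rewrite (eq_bigr (fun x => pX p x * q x - 2 * (pX p x * a x) * m + pX p x * r)); last first.
    move=> x _.
    rewrite (eq_bigr (fun x' => pX p x * q x * pX p x' - 2 * (pX p x * a x) * (pX p x' * a x') + pX p x * (pX p x' * q x'))); last first.
      by move=> x' _; rewrite -!aq; ring.
    rewrite big_split /= sumrB -!mulr_sumr pX1 er -/m; ring.
  rewrite big_split /= sumrB -!mulr_suml pX1 er -mulr_sumr -/m br; ring.
have Lge0 : 0 <= \sum_x pX p x * (a x - b) ^+ 2.
  by apply: sumr_ge0 => x _; rewrite mulr_ge0 ?sqr_ge0.
have m0 : 0 <= m by apply: sumr_ge0 => x _; rewrite mulr_ge0.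
have mb : m <= b.
  rewrite eL in Lge0; nra.
have st3 : \sum_x pX p x * (a x - b) ^+ 2 <= \sum_x \sum_x' pX p x * pX p x' * (a x - a x') ^+ 2.
  rewrite eL eD; nra.
have st4 : \sum_x \sum_x' pX p x * pX p x' * (a x - a x') ^+ 2 <= K1 C * Hs q.
  rewrite /K1 mulr_suml; apply: ler_sum => x _; rewrite mulr_suml; apply: ler_sum => x' _.
  rewrite -[X in _ <= X]mulrA; apply: ler_wpM2l; first by rewrite mulr_ge0.
  exact: (hC x x' a (fun y => Num.sqrt (sq q y / pY y))).
apply: (le_trans st1); apply: (le_trans st2); rewrite -mulrA; apply: ler_wpM2l; first exact: K0_ge0.
exact: le_trans st3 st4.
Qed.

Lemma sdpi : ~ decomposes p -> exists eta : R, 0 <= eta /\ eta < 1 /\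
  forall (T : finType) (q : X -> T -> R), encoder q -> IYT p q <= eta * IXT p q.
Proof.
move=> nd.
have [Cf HC] := choice (fun xx : X * X => poincare_pair nd xx.1 xx.2).
pose C x x' := Cf (x, x').
have C0 : forall x x', 0 <= C x x' by move=> x x'; case: (HC (x, x')).
have hC : forall x x' u v, (u x - u x') ^+ 2 <= C x x' * En u v.
  by move=> x x' u v; case: (HC (x, x')) => _; apply.
set K := K0 * K1 C.
have K0' : 0 <= K by rewrite mulr_ge0 ?K0_ge0 ?K1_ge0.
set K' := K + 1.
have Kp : 0 < K' by rewrite /K'; lra.
exists (1 - K'^-1); split.
  rewrite subr_ge0 invf_le1 //; rewrite /K'; lra.
split; first by rewrite ltrBlDl ltrDr invr_gt0.
move=> T q e.
have h : IXT p q <= K' * (IXT p q - IYT p q).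
  have hd := dpi e.
  apply: (@le_trans _ _ (K * (IXT p q - IYT p q))); last by rewrite /K'; nra.
  rewrite IXT_sum // IYT_sum // -sumrB mulr_sumr; apply: ler_sum => t _.
  have q0 : forall x, 0 <= q x t by move=> x; exact: e.1.
  apply: (le_trans (gX_le C0 hC q0)).
  apply: ler_wpM2l => //; exact: gap_ge.
rewrite mulrBl mul1r lerBrDr -lerBrDl mulrC.
by rewrite ler_pdivrMr // mulrC.
Qed.

Definition qe (T : finType) (l : R) (q : X -> T -> R) (x : X) (o : option T) : R :=
  match o with Some t => l * q x t | None => 1 - l end.

Lemma qe_encoder (T : finType) (l : R) (q : X -> T -> R) : encoder q -> 0 <= l <= 1 ->
  encoder (qe l q).
Proof.
move=> [q0 q1] /andP[l0 l1]; split.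
  by move=> x [t|] /=; [rewrite mulr_ge0 | lra].
by move=> x; rewrite sum_option /= -mulr_sumr q1; ring.
Qed.

Lemma pX_sum1 : \sum_x \sum_y p x y = 1.
Proof. exact: pX1. Qed.

Lemma IXT_qe (T : finType) (l : R) (q : X -> T -> R) : encoder q -> 0 <= l <= 1 ->
  IXT p (qe l q) = l * IXT p q.
Proof.
move=> [q0 q1] hl; rewrite /IXT -mutinf_erase //.
- congr mutinf; apply: funext => x; apply: funext => -[t|] /=.
    by rewrite mulrCA.
  by rewrite -mulr_sumr q1 mulr1 mulrC.
- by move=> x t; rewrite mulr_ge0 // ltW.
- by rewrite -pX1; apply: eq_bigr => x _; rewrite -mulr_sumr q1 mulr1.
Qed.

Lemma IYT_qe (T : finType) (l : R) (q : X -> T -> R) : encoder q -> 0 <= l <= 1 ->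
  IYT p (qe l q) = l * IYT p q.
Proof.
move=> [q0 q1] hl; rewrite /IYT -mutinf_erase //.
- congr mutinf; apply: funext => y; apply: funext => -[t|] /=.
    by rewrite mulr_sumr; apply: eq_bigr => x _; rewrite mulrCA.
  rewrite exchange_big mulr_sumr; apply: eq_bigr => x _.
  by rewrite -mulr_sumr q1 mulr1 mulrC.
- by move=> y t; apply: sumr_ge0 => x _; rewrite mulr_ge0 ?p0.
- rewrite (eq_bigr (fun y => \sum_x p x y)); last first.
    by move=> y _; rewrite exchange_big; apply: eq_bigr => x _; rewrite -mulr_sumr q1 mulr1.
  by rewrite exchange_big; exact: pX1.
Qed.

Definition q1 (x : X) (t : unit) : R := 1.

Lemma q1_encoder : encoder q1.
Proof. by split => // x; rewrite /q1 big_const card_unit /= addr0. Qed.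

Lemma values0 ix : 0 <= ix -> IB_values p ix 0.
Proof.
move=> ix0; exists (option unit), (qe 0 q1).
have h : 0 <= (0:R) <= 1 by rewrite lexx ler01.
split; first exact: qe_encoder q1_encoder h.
by rewrite IXT_qe ?IYT_qe //; try exact: q1_encoder; rewrite !mul0r.
Qed.

Lemma values_ub ix : ubound (IB_values p ix) ix.
Proof. move=> iy [T [q [e [hx ->]]]]; exact: le_trans (dpi e) hx. Qed.

Lemma values_has_sup ix : 0 <= ix -> has_sup (IB_values p ix).
Proof. by move=> ix0; split; [exists 0; exact: values0 | exists ix; exact: values_ub]. Qed.

Lemma curve_ge0 ix : 0 <= ix -> 0 <= IB_curve p ix.
Proof. move=> ix0; exact: sup_upper_bound (values_has_sup ix0) _ (values0 ix0). Qed.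

Lemma curve_le ix : 0 <= ix -> IB_curve p ix <= ix.
Proof. move=> ix0; apply: ge_sup; [exists 0; exact: values0 | exact: values_ub]. Qed.

Lemma curve_eq ix : 0 <= ix -> IB_values p ix ix -> IB_curve p ix = ix.
Proof.
move=> ix0 h; apply/eqP; rewrite eq_le curve_le //=.
exact: sup_upper_bound (values_has_sup ix0) _ h.
Qed.

Lemma curve_scale a b : 0 <= a -> a < b -> a * IB_curve p b <= b * IB_curve p a.
Proof.
move=> a0 ab; have b0 : 0 < b by apply: le_lt_trans ab.
have [->|an0] := eqVneq a 0; first by rewrite mul0r mulr_ge0 ?curve_ge0 // ltW.
have ap : 0 < a by rewrite lt_def an0 a0.
suff h : IB_curve p b <= b / a * IB_curve p a.
  apply: (le_trans (ler_wpM2l (ltW ap) h)).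
  have -> : a * (b / a * IB_curve p a) = b * IB_curve p a by field.
  by [].
apply: ge_sup; first by exists 0; exact: values0 (ltW b0).
move=> iy [T [q [e [hx ->]]]].
set l := a / b.
have hl : 0 <= l <= 1.
  by apply/andP; split; [rewrite divr_ge0 // ltW | rewrite ler_pdivrMr // mul1r ltW].
have : IB_values p a (l * IYT p q).
  exists (option T), (qe l q); split; first exact: qe_encoder.
  rewrite IXT_qe // IYT_qe //; split => //.
  have -> : a = l * b by rewrite /l divfK // gt_eqF.
  by rewrite ler_wpM2l //; case/andP: hl.
move/(sup_upper_bound (values_has_sup a0)) => h.
have -> : IYT p q = b / a * (l * IYT p q).
  by rewrite /l; field; rewrite an0 gt_eqF.
by rewrite ler_wpM2l // divr_ge0 // ltW.
Qed.

Lemma sum_if (k : nat) (F : 'I_k -> R) i : \sum_t (if i == t then F t else 0) = F i.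
Proof. by rewrite -big_mkcond (big_pred1 i) // => j; rewrite /= eq_sym. Qed.

Definition qb (k : nat) (f : X -> 'I_k) (x : X) (t : 'I_k) : R := if f x == t then 1 else 0.

Lemma qb_encoder k (f : X -> 'I_k) : encoder (qb f).
Proof.
split; first by move=> x t; rewrite /qb; case: eqP.
by move=> x; rewrite /qb sum_if.
Qed.

Definition rho k (f : X -> 'I_k) t := rq (fun x => qb f x t).

Lemma gX_qb k (f : X -> 'I_k) t :
  gX (fun x => qb f x t) = \sum_x (if f x == t then pX p x * ln (rho f t)^-1 else 0).
Proof.
apply: eq_bigr => x _; rewrite /qb; have [e|e] := eqVneq (f x) t; last by rewrite eqxx.
by rewrite oner_eq0 mulr1 div1r.
Qed.

Lemma IYT_qb k (f : X -> 'I_k) (g' : Y -> 'I_k) :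
  (forall x y, p x y != 0 -> f x = g' y) -> IYT p (qb f) = IXT p (qb f).
Proof.
move=> hfg; rewrite IXT_sum ?IYT_sum; try exact: qb_encoder.
apply: eq_bigr => t _.
rewrite gX_qb; set L := ln (rho f t)^-1.
have es : forall y, sq (fun x => qb f x t) y = if g' y == t then pY y else 0.
  move=> y; rewrite /sq /qb; case: eqP => hg.
    apply: eq_bigr => x _; have [->|pn] := eqVneq (p x y) 0; first by rewrite mul0r.
    by rewrite (hfg _ _ pn) hg eqxx mulr1.
  apply: big1 => x _; have [->|pn] := eqVneq (p x y) 0; first by rewrite mul0r.
  by rewrite (hfg _ _ pn); case: eqP => [/hg []|_]; rewrite mulr0.
have eY : gY (fun x => qb f x t) = \sum_y (if g' y == t then pY y * L else 0).
  apply: eq_bigr => y _; rewrite es; have [e|e] := eqVneq (g' y) t; last by rewrite eqxx.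
  case: eqP => [->|/eqP yn]; first by rewrite mul0r.
  by rewrite /L -/(rho f t) invfM mulrA mulfV // mul1r.
rewrite eY (eq_bigr (fun x => \sum_y (if f x == t then p x y * L else 0))); last first.
  move=> x _; case: eqP => _; last by rewrite big1.
  by rewrite /pX mulr_suml.
rewrite exchange_big; apply: eq_bigr => y _.
rewrite (eq_bigr (fun x => if g' y == t then p x y * L else 0)); last first.
  move=> x _; have [->|pn] := eqVneq (p x y) 0; first by rewrite mul0r; case: ifP; case: ifP.
  by rewrite (hfg _ _ pn).
by case: eqP => _; [rewrite /pY mulr_suml | rewrite big1].
Qed.

Lemma IXT_qb k (f : X -> 'I_k) : IXT p (qb f) = \sum_x pX p x * ln (rho f (f x))^-1.
Proof.
rewrite IXT_sum; last exact: qb_encoder.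
under eq_bigr do rewrite gX_qb.
by rewrite exchange_big; apply: eq_bigr => x _; rewrite sum_if.
Qed.

Lemma rho_ge k (f : X -> 'I_k) x : pX p x <= rho f (f x).
Proof.
have := le_sum1 (F := fun z => pX p z * qb f z (f x)) x.
rewrite /qb eqxx mulr1; apply => j; case: eqP => _; rewrite ?mulr1 ?mulr0 //; exact: ltW.
Qed.

Lemma rho_le1 k (f : X -> 'I_k) t : rho f t <= 1.
Proof.
rewrite -pX1; apply: ler_sum => x _; rewrite /qb; case: eqP => _; rewrite ?mulr1 ?mulr0 //.
exact: ltW.
Qed.

Lemma IXT_qb_gt0 k (f : X -> 'I_k) : (2 <= k)%N -> (forall i, exists x, f x = i) ->
  0 < IXT p (qb f).
Proof.
move=> k2 fs.
have [x0 hx0] := fs (Ordinal (ltn_trans (ltnSn 0) k2)).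
have [x1 hx1] := fs (Ordinal k2).
have fne : f x0 != f x1 by rewrite hx0 hx1.
have rp : forall x, 0 < rho f (f x) by move=> x; exact: lt_le_trans (pXpos x) (rho_ge f x).
have tge0 : forall x, 0 <= pX p x * ln (rho f (f x))^-1.
  move=> x; apply: mulr_ge0; [exact: ltW | by rewrite lnV ?posrE // oppr_ge0 ln_le0 // rho_le1].
have rlt : rho f (f x0) < 1.
  have e : 1 - rho f (f x0) = \sum_x pX p x * (1 - qb f x (f x0)).
    rewrite /rho /rq; apply/esym; under eq_bigr do rewrite mulrBr mulr1; by rewrite sumrB pX1.
  have : pX p x1 <= 1 - rho f (f x0).
    rewrite e; have := le_sum1 (F := fun x => pX p x * (1 - qb f x (f x0))) x1.
    rewrite /qb eq_sym (negbTE fne) subr0 mulr1; apply => j.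
    by case: eqP => _; rewrite ?subrr ?subr0 ?mulr0 ?mulr1 // ltW.
  have := pXpos x1; lra.
rewrite IXT_qb (bigD1 x0) //=.
apply: ltr_pwDl; last by apply: sumr_ge0 => x _; exact: tge0.
rewrite mulr_gt0 // ln_gt0 // invf_gt1 //.
Qed.

Lemma bwd : decomposes p -> linear_segment_beta1 p.
Proof.
move=> [k [f [g [k2 [fs [gs hfg]]]]]].
set Hb := IXT p (qb f).
have Hp : 0 < Hb := IXT_qb_gt0 k2 fs.
have e : forall ix, 0 <= ix <= Hb -> IB_curve p ix = ix.
  move=> ix /andP[ix0 ixb]; apply: curve_eq => //.
  set l := ix / Hb.
  have hl : 0 <= l <= 1.
    by apply/andP; split; [rewrite divr_ge0 // ltW | rewrite ler_pdivrMr // mul1r].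
  have elx : l * Hb = ix by rewrite /l divfK // gt_eqF.
  exists (option 'I_k), (qe l (qb f)); split; first exact: qe_encoder (qb_encoder f) hl.
  rewrite IXT_qe ?IYT_qe ?(IYT_qb hfg) -/Hb ?elx //; exact: qb_encoder.
exists 0, Hb; split => //; split => // ix hix.
rewrite e // e ?lexx ?ltW // add0r subr0.
by case/andP: hix.
Qed.

Lemma fwd : linear_segment_beta1 p -> decomposes p.
Proof.
move=> [a [b [a0 [ab hseg]]]]; apply: contrapT => nd.
have [eta [e0 [e1 he]]] := sdpi nd.
have b0 : 0 < b by apply: le_lt_trans ab.
have h1 : IB_curve p b <= eta * b.
  apply: ge_sup; first by exists 0; exact: values0 (ltW b0).
  move=> iy [T [q [e [hx ->]]]].
  apply: le_trans (he T q e) _; exact: ler_wpM2l.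
have h2 := curve_scale a0 ab.
have h3 : IB_curve p b = IB_curve p a + (b - a) by apply: hseg; rewrite ltW //= lexx.
have h4 : a <= IB_curve p a.
  have : (b - a) * a <= (b - a) * IB_curve p a.
    rewrite h3 in h2; have : a * (IB_curve p a + (b - a)) <= b * IB_curve p a := h2.
    move=> h; nra.
  by rewrite ler_pM2l // subr_gt0.
have : b <= eta * b by apply: le_trans h1; rewrite h3; lra.
nra.
Qed.
End S.

Unset Implicit Arguments.
Theorem theorem3 (R : realType) (X Y : finType) (p : X -> Y -> R) :
  (forall x y, 0 <= p x y) ->
  \sum_(x : X) \sum_(y : Y) p x y = 1 ->
  (forall x, 0 < pX p x) ->
  (linear_segment_beta1 p <-> decomposes p).
Proof.
move=> p0 p1 pXpos; split.
  exact: (fwd p0 pXpos p1).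
exact: (bwd p0 pXpos p1).
Qed.
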